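(* Let $\alpha>0$ and $\hbar>0$ be constants, let $\tilde g:\mathbb{R}\setminus\{0\}\to\mathbb{R}$ be continuously differentiable, and let $\psi:\mathbb{R}\to\mathbb{R}$ be a nonzero real-valued square-integrable function, continuously differentiable on $\mathbb{R}\setminus\{0\}$, such that the quantities $$\mathcal{A}=4\pi\int_{\mathbb{R}}dp\,\frac{\psi(p)^{2}}{p^{4}},\qquad \mathcal{B}=8\pi\int_{\mathbb{R}}dp\,\frac{d\tilde g(p)}{dp}\,\frac{\psi(p)^{2}}{p^{2}},\qquad \mathcal{C}=4\pi\int_{\mathbb{R}}dp\,\left\{\hbar^{2}\left[\frac{d\psi(p)}{dp}\right]^{2}+\left[\frac{d\tilde g(p)}{dp}\right]^{2}\psi(p)^{2}\right\}$$ are finite. Then $\mathcal{B}^{2}<4\mathcal{A}\mathcal{C}$. Consequently the quadratic function $\tau\mapsto \mathcal{A}(\alpha^{2}\tau)^{2}+\mathcal{B}(\alpha^{2}\tau)+\mathcal{C}$ has a strictly positive minimum over $\tau\in\mathbb{R}$.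
   Context: The quadratic $\mathcal{A}(\alpha^{2}\tau)^{2}+\mathcal{B}(\alpha^{2}\tau)+\mathcal{C}$ equals, for real $\psi$, the function $4\pi\int_{\mathbb{R}}dp\,\left|\left(\tilde g'(p)+\alpha^{2}\tau/p^{2}\right)\psi(p)-i\hbar\psi'(p)\right|^{2}$, the expectation value of the gauge-invariant area of 2-spheres at relational time $\tau$ for an arbitrary clock choice encoded by $\tilde g$. *)

(* Defs.v *)
From HB Require Import structures.
From mathcomp Require Import all_boot all_order all_algebra.
From mathcomp Require Import all_classical all_reals all_analysis.
Set Implicit Arguments. Unset Strict Implicit. Unset Printing Implicit Defensive.
Import Order.TTheory GRing.Theory Num.Theory.
Import numFieldNormedType.Exports.
Local Open Scope classical_set_scope.
Local Open Scope ring_scope.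

(* Integrands of A, B, C (the derivative is derive1; at p = 0 the value is
   irrelevant: a single point is Lebesgue-null; also 0^-1 = 0 in MathComp). *)
Definition integrandA {R : realType} (psi : R -> R) (p : R) : R :=
  psi p ^+ 2 / p ^+ 4.
Definition integrandB {R : realType} (g psi : R -> R) (p : R) : R :=
  derive1 g p * (psi p ^+ 2 / p ^+ 2).
Definition integrandC {R : realType} (hbar : R) (g psi : R -> R) (p : R) : R :=
  hbar ^+ 2 * (derive1 psi p) ^+ 2 + (derive1 g p) ^+ 2 * psi p ^+ 2.

Definition cA {R : realType} (psi : R -> R) : R :=
  4 * pi * Rintegral (@lebesgue_measure R) setT (integrandA psi).
Definition cB {R : realType} (g psi : R -> R) : R :=
  8 * pi * Rintegral (@lebesgue_measure R) setT (integrandB g psi).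
Definition cC {R : realType} (hbar : R) (g psi : R -> R) : R :=
  4 * pi * Rintegral (@lebesgue_measure R) setT (integrandC hbar g psi).

Definition areaQ {R : realType} (alpha hbar : R) (g psi : R -> R) (tau : R) : R :=
  cA psi * (alpha ^+ 2 * tau) ^+ 2 + cB g psi * (alpha ^+ 2 * tau) + cC hbar g psi.

Definition C1_off0 {R : realType} (f : R -> R) : Prop :=
  forall x : R, x != 0 -> derivable f x 1 /\ {for x, continuous (derive1 f)}.

(* Main.v *)
Require Import Defs.
From HB Require Import structures.
From mathcomp Require Import all_boot all_order all_algebra.
From mathcomp Require Import all_classical all_reals all_analysis.
From mathcomp Require Import ring lra.
Import Order.TTheory GRing.Theory Num.Theory.
Import numFieldNormedType.Exports.
Local Open Scope classical_set_scope.
Local Open Scope ring_scope.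

Lemma ae_int0 {R : realType} (f : R -> R) :
  (@lebesgue_measure R).-integrable setT (fun p => (f p)%:E) ->
  (forall x, 0 <= f x) ->
  Rintegral (@lebesgue_measure R) setT f = 0 ->
  {ae (@lebesgue_measure R), forall x, f x = 0}.
Proof.
move=> fi f0 I0.
have mf := measurable_int _ fi.
have H0 : (\int[@lebesgue_measure R]_(x in setT) `|(f x)%:E| = 0)%E.
  under eq_integral => x _ do rewrite gee0_abs ?lee_fin //.
  have := integrable_fin_num measurableT fi.
  move: I0; rewrite /Rintegral => I0 /fineK <-; by rewrite I0.
have := (ae_eq_integral_abs _ measurableT mf).1 H0.
apply: filterS => x /(_ I) /= [].
done.
Qed.

Lemma ae_neq0 (R : realType) : {ae (@lebesgue_measure R), forall x : R, x != 0}.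
Proof.
exists [set 0]; split => //; first by rewrite lebesgue_measure_set1.
by move=> x /= /negP; rewrite negbK => /eqP.
Qed.

Lemma deriv0 (R : realType) (psi : R -> R) : C1_off0 psi ->
  {ae (@lebesgue_measure R), forall x, derive1 psi x = 0} ->
  forall x, x != 0 -> derive1 psi x = 0.
Proof.
move=> C [N [mN N0 sub]] x x0; apply/eqP/negPn/negP => dx.
have [_ cx] := C x x0.
have /nbhs_ballP[e /= e0 B] : \forall t \near x, derive1 psi t != 0.
  exact: (cvgr_neq0 _ cx dx).
have : (@lebesgue_measure R) (ball x e) = 0.
  apply: (subset_measure0 _ mN _ N0); first exact: measurable_realfun.measurable_ball.
  move=> y /B /= yn.
  by apply: sub => /= /eqP; rewrite (negbTE yn).
rewrite lebesgue_measure_ball ?ltW // => -[] /eqP.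
by rewrite mulrn_eq0 /= gt_eqF.
Qed.

Lemma cst_seg (R : realType) (f : R -> R) (a b : R) : a <= b ->
  (forall z, a <= z <= b -> derivable f z 1 /\ derive1 f z = 0) -> f a = f b.
Proof.
move=> ab H.
have [c cab] : exists2 c, c \in `[a, b] & f b - f a = derive1 f c * (b - a).
  apply: MVT_segment => //.
    move=> z; rewrite in_itv /= => /andP[az zb].
    have zab : a <= z <= b by rewrite !ltW.
    have [dz _] := H z zab.
    rewrite derive1E; exact: derivableP.
  apply: continuous_in_subspaceT => z.
  rewrite inE /= in_itv /= => zab.
  have [dz _] := H z zab.
  exact/differentiable_continuous/derivable1_diffP.
have cab' : a <= c <= b by move: cab; rewrite in_itv.
have [_ ->] := H c cab'.
by rewrite mul0r => /eqP; rewrite subr_eq0 => /eqP ->.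
Qed.

Lemma const_inf (R : realType) (psi : R -> R) (S : set R) (c : R) :
  measurable S -> (@lebesgue_measure R) S = +oo%E ->
  (forall x, S x -> psi x = c) ->
  (@lebesgue_measure R).-integrable setT (fun p => (psi p ^+ 2)%:E) -> c = 0.
Proof.
move=> mS Soo Sc /integrableP[mf fin].
apply/eqP/negPn/negP => c0.
move: fin.
under eq_integral => x _ do rewrite gee0_abs ?lee_fin ?sqr_ge0 //.
have : (\int[@lebesgue_measure R]_(x in S) (psi x ^+ 2)%:E <=
        \int[@lebesgue_measure R]_(x in setT) (psi x ^+ 2)%:E)%E.
  apply: ge0_subset_integral => //.
  by move=> x _; rewrite lee_fin sqr_ge0.
rewrite [X in (X <= _)%E](eq_integral (cst (c ^+ 2)%:E)); last first.
  by move=> x; rewrite inE => xS; rewrite (Sc x xS).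
rewrite integral_cst //. rewrite [X in (_ * X <= _)%E]/=. have -> : (@lebesgue_measure R) S = +oo%E := Soo.
rewrite gt0_muley; last by rewrite lte_fin lt_def sqr_ge0 andbT sqrf_eq0.
by move=> H1 H2; move: (le_lt_trans H1 H2); rewrite ltxx.
Qed.

Lemma psi_zero (R : realType) (psi : R -> R) : C1_off0 psi ->
  (forall x, x != 0 -> derive1 psi x = 0) ->
  (@lebesgue_measure R).-integrable setT (fun p => (psi p ^+ 2)%:E) ->
  forall x, x != 0 -> psi x = 0.
Proof.
move=> C D fi.
have ok z : z != 0 -> derivable psi z 1 /\ derive1 psi z = 0.
  by move=> z0; split; [exact: (C z z0).1 | exact: D z z0].
have pos x : 0 < x -> psi x = psi 1.
  move=> x0; case: (leP x 1) => h.
    apply: cst_seg => // z /andP[xz z1]; apply: ok.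
    by rewrite gt_eqF // (lt_le_trans x0 xz).
  symmetry; apply: cst_seg; first exact: ltW.
  move=> z /andP[z1 zx]; apply: ok.
  by rewrite gt_eqF // (lt_le_trans _ z1).
have neg x : x < 0 -> psi x = psi (-1).
  move=> x0; case: (leP x (-1)) => h.
    apply: cst_seg => // z /andP[xz z1]; apply: ok.
    by rewrite lt_eqF // (le_lt_trans z1) // ltrN10.
  symmetry; apply: cst_seg; first exact: ltW.
  move=> z /andP[z1 zx]; apply: ok.
  by rewrite lt_eqF // (le_lt_trans zx).
have p1 : psi 1 = 0.
  apply: (@const_inf R psi [set` `]0, +oo[%R]) => //.
  - by rewrite lebesgue_measure_itv /= ltry.
  - by move=> x /=; rewrite in_itv /= andbT; exact: pos.
have n1 : psi (-1) = 0.
  apply: (@const_inf R psi [set` `]-oo, 0[%R]) => //.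
  - by rewrite lebesgue_measure_itv /= ltNyr.
move=> x x0; case: (ltgtP x 0) => h.
- by rewrite neg.
- by rewrite pos.
- by move: x0; rewrite h eqxx.
Qed.

Lemma combo (R : realType) (f1 f2 f3 : R -> R) (a b : R) :
  (@lebesgue_measure R).-integrable setT (fun p => (f1 p)%:E) ->
  (@lebesgue_measure R).-integrable setT (fun p => (f2 p)%:E) ->
  (@lebesgue_measure R).-integrable setT (fun p => (f3 p)%:E) ->
  (@lebesgue_measure R).-integrable setT (fun p => (a * f1 p + b * f2 p + f3 p)%:E) /\
  Rintegral (@lebesgue_measure R) setT (fun p => a * f1 p + b * f2 p + f3 p) =
  a * Rintegral (@lebesgue_measure R) setT f1 + b * Rintegral (@lebesgue_measure R) setT f2
  + Rintegral (@lebesgue_measure R) setT f3.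
Proof.
move=> i1 i2 i3.
have j1 : (@lebesgue_measure R).-integrable setT (EFin \o (fun p => a * f1 p)).
  apply: (eq_integrable measurableT _ _ _ (integrableZl measurableT a i1)).
  by move=> x _ /=; rewrite EFinM.
have j2 : (@lebesgue_measure R).-integrable setT (EFin \o (fun p => b * f2 p)).
  apply: (eq_integrable measurableT _ _ _ (integrableZl measurableT b i2)).
  by move=> x _ /=; rewrite EFinM.
have j12 : (@lebesgue_measure R).-integrable setT
    (EFin \o (fun p => a * f1 p + b * f2 p)).
  apply: (eq_integrable measurableT _ _ _ (integrableD measurableT j1 j2)).
  by move=> x _ /=; rewrite EFinD.
split.
  apply: (eq_integrable measurableT _ _ _ (integrableD measurableT j12 i3)).
  by move=> x _ /=; rewrite EFinD.
rewrite RintegralD //= RintegralD //= RintegralZl //= RintegralZl //.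
Qed.

Lemma ae_impl {R : realType} {P Q : R -> Prop} : (forall x, P x -> Q x) ->
  {ae (@lebesgue_measure R), forall x, P x} -> {ae (@lebesgue_measure R), forall x, Q x}.
Proof.
move=> H [N [mN N0 sub]]; exists N; split => // x /= nQ.
by apply: sub => /= Px; apply: nQ; exact: H.
Qed.

Lemma ae_impl2 {R : realType} {P Q S : R -> Prop} : (forall x, P x -> Q x -> S x) ->
  {ae (@lebesgue_measure R), forall x, P x} -> {ae (@lebesgue_measure R), forall x, Q x} ->
  {ae (@lebesgue_measure R), forall x, S x}.
Proof.
move=> H [N [mN N0 sub]] [M [mM M0 subM]]; exists (N `|` M); split => //.
- exact: measurableU.
- by rewrite measureU0.
- move=> x /= nS; case: (pselect (P x)) => Px; last by left; exact: sub.
  right; apply: subM => /= Qx; apply: nS; exact: H.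
Qed.

Theorem mainTheorem2 (R : realType) (alpha hbar : R) (g psi : R -> R) :
  0 < alpha -> 0 < hbar ->
  C1_off0 g ->
  C1_off0 psi ->
  measurable_fun setT psi ->
  (@lebesgue_measure R).-integrable setT (fun p => (psi p ^+ 2)%:E) ->
  ~ {ae (@lebesgue_measure R), forall p, psi p = 0} ->
  (@lebesgue_measure R).-integrable setT (fun p => (integrandA psi p)%:E) ->
  (@lebesgue_measure R).-integrable setT (fun p => (integrandB g psi p)%:E) ->
  (@lebesgue_measure R).-integrable setT (fun p => (integrandC hbar g psi p)%:E) ->
  cB g psi ^+ 2 < 4 * cA psi * cC hbar g psi /\
  exists tau0 : R, 0 < areaQ alpha hbar g psi tau0 /\
    forall tau : R, areaQ alpha hbar g psi tau0 <= areaQ alpha hbar g psi tau.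
Proof.
move=> al0 hb0 Cg Cpsi mpsi ipsi npsi iA iB iC.
set a := Rintegral (@lebesgue_measure R) setT (integrandA psi).
set b := Rintegral (@lebesgue_measure R) setT (integrandB g psi).
set c := Rintegral (@lebesgue_measure R) setT (integrandC hbar g psi).
have ae0 : {ae (@lebesgue_measure R), forall p, p != 0 -> psi p = 0} ->
    {ae (@lebesgue_measure R), forall p, psi p = 0}.
  move=> H; apply: (ae_impl2 _ H (ae_neq0 R)).
  by move=> p /[apply].
have key t : 0 < a * t ^+ 2 + 2 * b * t + c.
  have [ih E] := @combo R _ _ _ (t ^+ 2) (2 * t) iA iB iC.
  set h := (fun p => t ^+ 2 * integrandA psi p + 2 * t * integrandB g psi p + integrandC hbar g psi p) in ih E.
  have hE p : h p = (derive1 g p + t * (p ^+ 2)^-1) ^+ 2 * psi p ^+ 2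
                    + hbar ^+ 2 * derive1 psi p ^+ 2.
    rewrite /h /integrandA /integrandB /integrandC.
    have -> : p ^+ 4 = (p ^+ 2) ^+ 2 by rewrite -exprM.
    rewrite -exprVn; ring.
  have h0 p : 0 <= h p by rewrite hE addr_ge0 // mulr_ge0 // sqr_ge0.
  have I0 : 0 <= Rintegral (@lebesgue_measure R) setT h by apply: Rintegral_ge0 => p _; exact: h0.
  rewrite (_ : a * t ^+ 2 + 2 * b * t + c = Rintegral (@lebesgue_measure R) setT h);
    last by rewrite E /a /b /c; ring.
  rewrite lt_def I0 andbT; apply/negP => /eqP HI.
  have aeh := @ae_int0 R h ih h0 HI.
  have aed : {ae (@lebesgue_measure R), forall x, derive1 psi x = 0}.
    move: aeh; apply: ae_impl => p hp0.
    move: hp0; rewrite hE => /eqP.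
    rewrite paddr_eq0; last 2 first.
    - exact: mulr_ge0 (sqr_ge0 _) (sqr_ge0 _).
    - exact: mulr_ge0 (sqr_ge0 _) (sqr_ge0 _).
    case/andP=> _; rewrite mulf_eq0 !sqrf_eq0 (gt_eqF hb0) /= => /eqP //.
  apply: npsi; apply: ae0; apply: aeW.
  exact: (@psi_zero R psi Cpsi (@deriv0 R psi Cpsi aed) ipsi).
have a0 : 0 < a.
  have I0 : 0 <= a.
    apply: Rintegral_ge0 => p _; rewrite /integrandA mulr_ge0 ?sqr_ge0 //.
    by rewrite invr_ge0 exprn_even_ge0.
  rewrite lt_def I0 andbT; apply/negP => /eqP HI.
  have h0 p : 0 <= integrandA psi p.
    by rewrite /integrandA mulr_ge0 ?sqr_ge0 // invr_ge0 exprn_even_ge0.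
  have aeh := @ae_int0 R _ iA h0 HI.
  apply: npsi; apply: ae0; move: aeh; apply: ae_impl => p hp p0.
  move: hp; rewrite /integrandA => /eqP; rewrite mulf_eq0 invr_eq0 expf_eq0 /=. rewrite expf_eq0 /= (negbTE p0) orbF.
  by move=> /eqP.
have disc : 0 < a * c - b ^+ 2.
  have := key (- b / a).
  have -> : a * (- b / a) ^+ 2 + 2 * b * (- b / a) + c = (a * c - b ^+ 2) / a.
    by field; rewrite gt_eqF.
  move=> h; have := mulr_gt0 h a0; rewrite divfK // gt_eqF //.
have P0 : 0 < (pi : R) := pi_gt0 R.
split.
  rewrite /cA /cB /cC -/a -/b -/c.
  have := mulr_gt0 (mulr_gt0 P0 P0) disc.
  nra.
exists (- b / a / alpha ^+ 2).
have ->: areaQ alpha hbar g psi (- b / a / alpha ^+ 2) =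
   4 * pi * (a * (- b / a) ^+ 2 + 2 * b * (- b / a) + c).
  rewrite /areaQ /cA /cB /cC -/a -/b -/c.
  by field; rewrite ?gt_eqF // exprn_gt0.
split; first by rewrite mulr_gt0 // mulr_gt0.
move=> tau; rewrite /areaQ /cA /cB /cC -/a -/b -/c.
set t := alpha ^+ 2 * tau.
set t0 := - b / a.
have hb : b = - (a * t0) by rewrite /t0; field; rewrite gt_eqF.
rewrite hb.
have := mulr_ge0 (ltW (mulr_gt0 P0 a0)) (sqr_ge0 (t - t0)).
nra.
Qed.
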